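(* Let $l$ be a (random) convex and differentiable loss function on $\mathbb{R}^p$, let $\lambda_1\ge\dots\ge\lambda_p\ge 0$ be arbitrary, and let $\hat b$ be a minimizer of $l(b)+\sum_{i=1}^p\lambda_i|b|_{(i)}$. Let $b^0\in\mathbb{R}^p$ be a fixed vector with support $S=\{j:b^0_j\neq 0\}$ and $S^c=\{1,\dots,p\}\setminus S$. Then for any $a>0$, $$FDR=\sum_{r=1}^p\frac1r\sum_{i\in S^c}P\big(|T_i(a)|>\lambda_r,\ T(a)\in H_r\big).$$
   Context: $|w|_{(1)}\ge\dots\ge|w|_{(p)}$ are the ordered absolute values of $w\in\mathbb{R}^p$. $U(b)=-\nabla l(b)$ and $T(a)=U(\hat b)+a\hat b$. $FDR=\mathbb{E}(V/(R\vee1))$ with $V=\#\{j:b^0_j=0,\hat b_j\neq0\}$ and $R=\#\{j:\hat b_j\neq0\}$. For $r\in\{1,\dots,p\}$, $$H_r=\Big\{w\in\mathbb{R}^p:\ \forall_{j\le r}\ \sum_{i=j}^r\lambda_i<\sum_{i=j}^r|w|_{(i)}\ \text{ and }\ \forall_{j\ge r+1}\ \sum_{i=r+1}^j\lambda_i\ge\sum_{i=r+1}^j|w|_{(i)}\Big\}.$$ *)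

(* Defs.v *)
From HB Require Import structures.
From mathcomp Require Import all_boot all_order all_algebra.
From mathcomp Require Import all_classical all_reals all_analysis.
Set Implicit Arguments. Unset Strict Implicit. Unset Printing Implicit Defensive.
Import Order.TTheory GRing.Theory Num.Theory.
Import numFieldNormedType.Exports.
Local Open Scope ring_scope.

(* sorted absolute values, 0-based: sabs w i = |w|_(i+1) *)
Definition sabs {R : realType} {p : nat} (w : 'rV[R]_p) (i : nat) : R :=
  nth 0 (sort (fun x y : R => y <= x) [seq `|w 0 j| | j <- enum 'I_p]) i.

(* SLOPE penalty J_lambda(b) = sum_{i=1}^p lambda_i |b|_(i); lam 0-based *)
Definition slope_pen {R : realType} {p : nat} (lam : nat -> R) (b : 'rV[R]_p) : R :=
  \sum_(0 <= i < p) lam i * sabs b i.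

Definition grad {R : realType} {p : nat} (f : 'rV[R]_p -> R) (b : 'rV[R]_p)
  : 'rV[R]_p := \row_j ('D_(delta_mx 0 j) f b).

Definition convex_fun {R : realType} {p : nat} (f : 'rV[R]_p -> R) : Prop :=
  forall (x y : 'rV[R]_p) (t : R), 0 <= t -> t <= 1 ->
    f (t *: x + (1 - t) *: y) <= t * f x + (1 - t) * f y.

(* H_r (r is 1-based as in the paper, lam and sabs are 0-based):
   for all paper-j <= r : sum_{i=j}^r lambda_i < sum_{i=j}^r |w|_(i)
   for all paper-j >= r+1 (j <= p) : sum_{i=r+1}^j lambda_i >= sum_{i=r+1}^j |w|_(i) *)
Definition H_set {R : realType} {p : nat} (lam : nat -> R) (r : nat) (w : 'rV[R]_p) : Prop :=
  (forall j : nat, (j < r)%N ->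
     \sum_(j <= i < r) lam i < \sum_(j <= i < r) sabs w i) /\
  (forall j : nat, (r < j <= p)%N ->
     \sum_(r <= i < j) sabs w i <= \sum_(r <= i < j) lam i).

Definition nV {R : realType} {p : nat} (b0 bh : 'rV[R]_p) : nat :=
  #|[set j : 'I_p | (b0 0 j == 0) && (bh 0 j != 0)]|.
Definition nR {R : realType} {p : nat} (bh : 'rV[R]_p) : nat :=
  #|[set j : 'I_p | bh 0 j != 0]|.

(* Main.v *)
Require Import Defs.
From HB Require Import structures.
From mathcomp Require Import all_boot all_order all_algebra.
From mathcomp Require Import all_classical all_reals all_analysis.
From mathcomp Require Import ring lra.
Set Implicit Arguments. Unset Strict Implicit. Unset Printing Implicit Defensive.
Import Order.TTheory GRing.Theory Num.Theory.
Import numFieldNormedType.Exports.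
Local Open Scope ring_scope.
Section Sorting.
Context {R : realType} {p : nat}.
Implicit Types (w : 'rV[R]_p).

Definition fw w (j : 'I_p) : R := `|w 0 j|.
Definition leo w : rel 'I_p := fun i j => fw w j <= fw w i.
Definition ordE w := sort (leo w) (enum 'I_p).

Lemma sabsE w i : sabs w i = nth 0 (map (fw w) (ordE w)) i.
Proof.
rewrite /sabs /ordE (map_sort (leT' := leo w) (leT := fun x y : R => y <= x)) //.
Qed.

Lemma leo_total w : total (leo w).
Proof. by move=> i j; rewrite /leo le_total. Qed.

Lemma leo_trans w : transitive (leo w).
Proof. by move=> i j k; rewrite /leo => h1 h2; exact: le_trans h2 h1. Qed.

Lemma ordE_uniq w : uniq (ordE w).
Proof. by rewrite sort_uniq enum_uniq. Qed.

Lemma size_ordE w : size (ordE w) = p.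
Proof. by rewrite size_sort size_enum_ord. Qed.

Lemma mem_ordE w j : j \in ordE w.
Proof. by rewrite mem_sort mem_enum. Qed.

Definition top w k : {set 'I_p} := [set x in take k (ordE w)].
Definition Sk w k := \sum_(j in top w k) fw w j.

Lemma card_top w k : (k <= p)%N -> #|top w k| = k.
Proof.
move=> kp; rewrite cardsE.
have /card_uniqP -> : uniq (take k (ordE w)) by rewrite take_uniq // ordE_uniq.
by rewrite size_take size_ordE; case: ltnP => // h; apply/eqP; rewrite eqn_leq kp h.
Qed.

Lemma Sk_sum w k : Sk w k = \sum_(x <- take k (ordE w)) fw w x.
Proof.
rewrite /Sk big_uniq ?take_uniq ?ordE_uniq //.
by apply: eq_bigl => x; rewrite inE.
Qed.

Lemma sum_sabs w k : (k <= p)%N -> \sum_(0 <= i < k) sabs w i = Sk w k.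
Proof.
move=> kp; rewrite Sk_sum -(big_map (fw w) xpredT id).
rewrite [RHS](big_nth 0) size_map size_take size_ordE.
have -> : (if (k < p)%N then k else p) = k.
  by case: ltnP => // h; apply/eqP; rewrite eqn_leq kp h.
apply: eq_big_nat => i /andP[_ ik].
by rewrite sabsE map_take nth_take.
Qed.

Lemma top_ge w k x y : x \in top w k -> y \notin top w k -> fw w y <= fw w x.
Proof.
rewrite !inE => hx hy.
have := sort_sorted (leo_total w) (enum 'I_p).
rewrite -/(ordE w) (sorted_pairwise (@leo_trans w)) -(cat_take_drop k (ordE w)).
rewrite pairwise_cat => /and3P[/allrelP H _ _].
apply: (H x y hx).
have := mem_ordE w y; rewrite -{1}(cat_take_drop k (ordE w)) mem_cat.
by rewrite (negbTE hy).
Qed.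

Lemma fw_ge0 w j : 0 <= fw w j.
Proof. exact: normr_ge0. Qed.

Lemma Sk_max w (B : {set 'I_p}) k : (k <= p)%N -> #|B| = k ->
  \sum_(j in B) fw w j <= Sk w k.
Proof.
move=> kp cB; set T := top w k.
rewrite /Sk (big_setID T) [X in _ <= X](big_setID B) /= finset.setIC lerD2l.
set n := #|B :\: T|.
have cTB : #|T :\: B| = n by rewrite /n !cardsD cB card_top // finset.setIC.
have [n0|npos] := eqVneq n 0%N.
  have -> : B :\: T = finset.set0 by apply/eqP; rewrite -cards_eq0 -/n n0.
  by rewrite big_set0 sumr_ge0 // => i _; exact: fw_ge0.
have E1 : \sum_(y in B :\: T) \sum_(x in T :\: B) fw w y
          = (\sum_(y in B :\: T) fw w y) *+ n.
  by rewrite -sumrMnl; apply: eq_bigr => y _; rewrite sumr_const cTB.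
have E2 : \sum_(y in B :\: T) \sum_(x in T :\: B) fw w x
          = (\sum_(x in T :\: B) fw w x) *+ n.
  by rewrite sumr_const.
have : (\sum_(y in B :\: T) fw w y) *+ n <= (\sum_(x in T :\: B) fw w x) *+ n.
  rewrite -E1 -E2; apply: ler_sum => y; rewrite inE => /andP[yT _].
  apply: ler_sum => x; rewrite inE => /andP[_ xT].
  exact: top_ge xT yT.
by rewrite lerMn2r (negbTE npos).
Qed.

End Sorting.
Section SkProps.
Context {R : realType} {p : nat}.
Implicit Types (w x y z : 'rV[R]_p).

Lemma Sk0 w : Sk w 0 = 0.
Proof. by rewrite Sk_sum take0 big_nil. Qed.

Lemma Sk_ge0 w k : 0 <= Sk w k.
Proof. by apply: sumr_ge0 => j _; exact: fw_ge0. Qed.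

Lemma fwZ t w j : 0 <= t -> fw (t *: w) j = t * fw w j.
Proof. by move=> t0; rewrite /fw mxE normrM ger0_norm. Qed.

Lemma SkZ t w k : 0 <= t -> (k <= p)%N -> Sk (t *: w) k = t * Sk w k.
Proof.
move=> t0 kp; apply/eqP; rewrite eq_le; apply/andP; split.
  rewrite {1}/Sk; under eq_bigr do rewrite fwZ //.
  by rewrite -mulr_sumr; apply: (ler_wpM2l t0); exact: (Sk_max w kp (card_top (t *: w) kp)).
rewrite {1}/Sk mulr_sumr; under eq_bigr do rewrite -fwZ //.
exact: (Sk_max (t *: w) kp (card_top w kp)).
Qed.

Lemma SkD x y k : (k <= p)%N -> Sk (x + y) k <= Sk x k + Sk y k.
Proof.
move=> kp; rewrite {1}/Sk.
apply: (@le_trans _ _ (\sum_(j in top (x + y) k) (fw x j + fw y j))).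
  by apply: ler_sum => j _; rewrite /fw mxE ler_normD.
by rewrite big_split; apply: lerD; apply: Sk_max kp (card_top (x + y) kp).
Qed.

Lemma Sk_zero k : Sk (0 : 'rV[R]_p) k = 0.
Proof. by apply: big1 => j _; rewrite /fw mxE normr0. Qed.

Lemma Sk_le_card (c : 'rV[R]_p) (B : {set 'I_p}) m : (m <= p)%N ->
  (forall j, fw c j <= (j \in B)%:R) -> Sk c m <= (minn m #|B|)%:R.
Proof.
move=> mp H; rewrite /Sk.
apply: (@le_trans _ _ (\sum_(j in top c m) ((j \in B)%:R : R))).
  by apply: ler_sum => j _; exact: H.
rewrite (big_setID B) /= [X in _ + X]big1 ?addr0; last first.
  by move=> j; rewrite inE => /andP[/negbTE -> _].
rewrite (eq_bigr (fun _ => 1)); last by move=> j; rewrite inE => /andP[_ ->].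
rewrite sumr_const ler_nat leq_min; apply/andP; split.
  by rewrite -{2}(card_top c mp); apply: subset_leq_card; apply: subsetIl.
by apply: subset_leq_card; apply: subsetIr.
Qed.

End SkProps.

Lemma abel_sum {R : realType} (n : nat) (a s : nat -> R) : s 0%N = 0 ->
  \sum_(0 <= i < n) a i * (s i.+1 - s i) =
  \sum_(0 <= i < n) (a i - a i.+1) * s i.+1 + a n * s n.
Proof.
move=> s0; elim: n => [|n IH]; first by rewrite !big_geq // s0 mulr0 addr0.
rewrite !big_nat_recr //= IH; ring.
Qed.

Section JProps.
Context {R : realType} {p : nat} (lam : nat -> R).
Hypothesis Hmono : forall i j : nat, (i <= j < p)%N -> lam j <= lam i.
Hypothesis Hnn : forall i : nat, (i < p)%N -> 0 <= lam i.
Implicit Types (w x y z c : 'rV[R]_p).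

Definition lamt i := if (i < p)%N then lam i else 0.
Definition Lam k := \sum_(0 <= i < k) lam i.
Local Notation J := (slope_pen lam).

Lemma nu_ge0 i : (i < p)%N -> 0 <= lamt i - lamt i.+1.
Proof.
move=> ip; rewrite /lamt ip subr_ge0; case: ifP => h.
  by apply: Hmono; rewrite leqnSn h.
exact: Hnn.
Qed.

Lemma J_abel c : J c = \sum_(0 <= i < p) (lamt i - lamt i.+1) * Sk c i.+1.
Proof.
rewrite /slope_pen.
have -> : \sum_(0 <= i < p) lam i * sabs c i =
          \sum_(0 <= i < p) lamt i * (Sk c i.+1 - Sk c i).
  apply: eq_big_nat => i /andP[_ ip]; rewrite /lamt ip.
  rewrite -sum_sabs // -sum_sabs ?(ltnW ip) // big_nat_recr //=.
  by rewrite addrC addrK.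
by rewrite abel_sum ?Sk0 // /lamt ltnn mul0r addr0.
Qed.

Lemma J_zero : J (0 : 'rV[R]_p) = 0.
Proof. by rewrite J_abel big1 // => i _; rewrite Sk_zero mulr0. Qed.

Lemma sum_min k : (k <= p)%N ->
  \sum_(0 <= i < p) (lamt i - lamt i.+1) * (minn i.+1 k)%:R = Lam k.
Proof.
move=> kp.
have := @abel_sum _ p lamt (fun i => (minn i k)%:R : R).
rewrite min0n /lamt ltnn mul0r addr0 => <- //.
rewrite (big_cat_nat (leq0n k) kp) /= [\sum_(k <= i < p) _]big1_seq ?addr0; last first.
  move=> i /andP[_]; rewrite mem_index_iota => /andP[ki _].
  rewrite (minn_idPr ki) (minn_idPr (leqW ki)); by rewrite subrr mulr0.
apply: eq_big_nat => i /andP[_ ik].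
rewrite (leq_trans ik kp) (minn_idPl ik) (minn_idPl (ltnW ik)).
have -> : (i.+1)%:R - i%:R = 1 :> R by rewrite -natr1 addrAC subrr add0r.
by rewrite mulr1.
Qed.

Lemma J_comb x y z (al be : R) : 0 <= al -> 0 <= be ->
  (forall m, (0 < m <= p)%N -> Sk x m <= al * Sk y m + be * Sk z m) ->
  J x <= al * J y + be * J z.
Proof.
move=> a0 b0 H; rewrite !J_abel !mulr_sumr -big_split /=.
apply: ler_sum_nat => i /andP[_ ip].
have := nu_ge0 ip; have := H i.+1 ip.
set nu := lamt i - lamt i.+1 => h1 h2; nra.
Qed.

Lemma J_le x y (ka : R) k : (k <= p)%N ->
  (forall m, (0 < m <= p)%N -> Sk x m <= Sk y m + ka * (minn m k)%:R) ->
  J x <= J y + ka * Lam k.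
Proof.
move=> kp H; rewrite !J_abel -(sum_min kp) mulr_sumr -big_split /=.
apply: ler_sum_nat => i /andP[_ ip].
have := nu_ge0 ip; have := H i.+1 ip.
set nu := lamt i - lamt i.+1 => h1 h2; nra.
Qed.

End JProps.
Section RD.
Local Open Scope classical_set_scope.
Lemma right_dnbhs {R : realType} {T : topologicalType} (g : R -> T) (l : T) :
  g @ 0^' --> l -> g @ 0^'+ --> l.
Proof.
move=> H; apply: cvg_trans H.
move=> P /=; rewrite !nbhs_simpl /=.
rewrite /dnbhs /within /= => Hx.
rewrite /at_right /within /=.
move: Hx; apply: filterS => x Hx x0; apply: Hx; exact: lt0r_neq0.
Qed.
End RD.
Section Base.
Context {R : realType} {p : nat} (lam : nat -> R).
Hypothesis Hmono : forall i j : nat, (i <= j < p)%N -> lam j <= lam i.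
Hypothesis Hnn : forall i : nat, (i < p)%N -> 0 <= lam i.
Local Notation J := (slope_pen lam).

Lemma J_convex (b c : 'rV[R]_p) h : 0 <= h -> h <= 1 ->
  J ((1 - h) *: b + h *: c) <= (1 - h) * J b + h * J c.
Proof.
move=> h0 h1; apply: J_comb => //; first by rewrite subr_ge0.
move=> m /andP[_ mp].
apply: le_trans (SkD _ _ mp) _.
by rewrite !SkZ // subr_ge0.
Qed.

Lemma J_subadd (b c : 'rV[R]_p) : J (b + c) <= J b + J c.
Proof.
have := @J_comb _ _ lam Hmono Hnn (b + c) b c 1 1 ler01 ler01.
rewrite !mul1r; apply => m /andP[_ mp]; rewrite !mul1r; exact: SkD.
Qed.

Lemma base_ineq (f : 'rV[R]_p -> R) (b : 'rV[R]_p) :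
  differentiable f b -> (forall c, f b + J b <= f c + J c) ->
  forall c : 'rV[R]_p, \sum_j (- grad f b 0 j) * (c 0 j - b 0 j) <= J c - J b.
Proof.
move=> df Hmin c; set v := c - b.
have Dv : 'D_v f b = \sum_j v 0 j * grad f b 0 j.
  rewrite deriveE // {1}(row_sum_delta v) linear_sum.
  apply: eq_bigr => j _; rewrite linearZ /= /grad !mxE deriveE //.
have -> : \sum_j (- grad f b 0 j) * (c 0 j - b 0 j) = - 'D_v f b.
  rewrite Dv -sumrN; apply: eq_bigr => j _; rewrite /v !mxE; ring.
rewrite lerNl opprB.
have cv : derivable f b v by exact: diff_derivable.
have := right_dnbhs cv.
set g := (fun h => _) => Hg.
apply: (cvgr_to_ge Hg).
near=> h.
have h0 : 0 < h by near: h; exact: nbhs_right_gt.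
have h1 : h < 1 by near: h; exact: nbhs_right_lt.
have E : h *: v + b = (1 - h) *: b + h *: c.
  by apply/rowP => j; rewrite /v !mxE; ring.
have key : h * (J b - J c) <= f (h *: v + b) - f b.
  have := Hmin (h *: v + b); rewrite E.
  have := J_convex b c (ltW h0) (ltW h1); lra.
rewrite /g /= -(ler_pM2l h0) /= mulrA mulfV ?gt_eqF // mul1r.
exact: key.
Unshelve. all: by end_near.
Qed.

End Base.
Lemma card_le_p {p : nat} (B : {set 'I_p}) : (#|B| <= p)%N.
Proof. by have := max_card B; rewrite card_ord. Qed.

Lemma sum_indic {R : realType} {p : nat} (B A : {set 'I_p}) :
  \sum_(j in B) ((j \in A)%:R : R) = (#|B :&: A|)%:R.
Proof.
rewrite (big_setID A) /= [X in _ + X]big1 ?addr0; last first.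
  by move=> j; rewrite inE => /andP[/negbTE -> _].
rewrite (eq_bigr (fun _ => 1)); last by move=> j; rewrite inE => /andP[_ ->].
by rewrite sumr_const.
Qed.

Lemma sum_sub_nat {R : realType} (F : nat -> R) j r : (j <= r)%N ->
  \sum_(j <= i < r) F i = \sum_(0 <= i < r) F i - \sum_(0 <= i < j) F i.
Proof. by move=> jr; rewrite (big_cat_nat (leq0n j) jr) /=; lra. Qed.

Lemma LamS {R : realType} (lam : nat -> R) k : Lam lam k.+1 = Lam lam k + lam k.
Proof. by rewrite /Lam big_nat_recr. Qed.

Lemma sum_sabs_range {R : realType} {p : nat} (w : 'rV[R]_p) j r :
  (j <= r)%N -> (r <= p)%N ->
  \sum_(j <= i < r) sabs w i = Sk w r - Sk w j.
Proof.
move=> jr rp; rewrite sum_sub_nat // !sum_sabs //; exact: leq_trans jr rp.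
Qed.

Lemma H_setE {R : realType} {p : nat} (lam : nat -> R) (w : 'rV[R]_p) r : (r <= p)%N ->
  H_set lam r w <->
  ((forall j, (j < r)%N -> Lam lam r - Lam lam j < Sk w r - Sk w j) /\
   (forall j, (r < j <= p)%N -> Sk w j - Sk w r <= Lam lam j - Lam lam r)).
Proof.
move=> rp; rewrite /H_set; split => -[H1 H2]; split.
- move=> j jr; have := H1 j jr.
  by rewrite sum_sabs_range ?(ltnW jr) // sum_sub_nat ?(ltnW jr).
- move=> j /andP[rj jp]; have := H2 j; rewrite rj jp => /(_ isT).
  by rewrite sum_sabs_range ?(ltnW rj) // sum_sub_nat ?(ltnW rj).
- move=> j jr; have := H1 j jr.
  by rewrite sum_sabs_range ?(ltnW jr) // sum_sub_nat ?(ltnW jr).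
- move=> j /andP[rj jp]; have := H2 j; rewrite rj jp => /(_ isT).
  by rewrite sum_sabs_range ?(ltnW rj) // sum_sub_nat ?(ltnW rj).
Qed.

Section Det.
Context {R : realType} {p : nat} (lam : nat -> R).
Hypothesis Hmono : forall i j : nat, (i <= j < p)%N -> lam j <= lam i.
Hypothesis Hnn : forall i : nat, (i < p)%N -> 0 <= lam i.
Local Notation J := (slope_pen lam).
Variables (b u : 'rV[R]_p) (a : R).
Hypothesis a0 : 0 < a.
Hypothesis BI : forall c : 'rV[R]_p,
  \sum_j u 0 j * (c 0 j - b 0 j) <= J c - J b.

Local Notation A := [set j : 'I_p | b 0 j != 0].
Local Notation Rn := #|A|.
Definition TT := u + a *: b.

Lemma F3 (B : {set 'I_p}) : \sum_(j in B) fw u j <= Lam lam #|B|.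
Proof.
pose c : 'rV[R]_p := \row_j (if j \in B then (if 0 <= u 0 j then 1 else -1) else 0).
have H1 : \sum_j u 0 j * ((b + c) 0 j - b 0 j) = \sum_(j in B) fw u j.
  rewrite [RHS]big_mkcond /=; apply: eq_bigr => j _.
  rewrite !mxE (addrC (b 0 j)) addrK; case: (j \in B); last by rewrite mulr0.
  rewrite /fw; case: ifP => h; first by rewrite mulr1 ger0_norm.
  by rewrite ltr0_norm ?mulrN1 // ltNge h.
have H2 : J c <= J (0 : 'rV[R]_p) + 1 * Lam lam #|B|.
  apply: (J_le Hmono Hnn) => //; first exact: card_le_p.
  move=> m /andP[_ mp]; rewrite Sk_zero add0r mul1r.
  apply: Sk_le_card => // j; rewrite /fw mxE; case: (j \in B) => /=.
    by case: ifP; rewrite ?normrN normr1.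
  by rewrite normr0.
have := BI (b + c); rewrite H1.
have := J_subadd Hmono Hnn b c.
rewrite J_zero // add0r mul1r in H2; lra.
Qed.

Definition tt0 := (2 * (1 + \sum_(j in A) (fw b j)^-1))^-1.

Lemma fwb_gt0 j : j \in A -> 0 < fw b j.
Proof. by rewrite inE /fw normr_gt0. Qed.

Lemma fwb_out j : j \notin A -> b 0 j = 0.
Proof. by rewrite inE negbK => /eqP. Qed.

Lemma tt0_gt0 : 0 < tt0.
Proof.
rewrite /tt0 invr_gt0 pmulr_rgt0 // ltr_pwDl // sumr_ge0 // => j jA.
by rewrite invr_ge0 fw_ge0.
Qed.

Lemma tt0_lt j : j \in A -> tt0 < fw b j.
Proof.
move=> jA; have bj := fwb_gt0 jA.
rewrite -[fw b j]invrK /tt0 ltf_pV2 ?posrE ?invr_gt0 //; last first.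
  rewrite pmulr_rgt0 // ltr_pwDl // sumr_ge0 // => k _.
  by rewrite invr_ge0 fw_ge0.
have : (fw b j)^-1 <= \sum_(k in A) (fw b k)^-1.
  rewrite (big_setD1 j jA) /= lerDl sumr_ge0 // => k _.
  by rewrite invr_ge0 fw_ge0.
have : 0 < (fw b j)^-1 by rewrite invr_gt0.
lra.
Qed.

Definition sg : 'rV[R]_p := \row_j (b 0 j / `|b 0 j|).
Definition xx : 'rV[R]_p := b - tt0 *: sg.

Lemma fw_xx j : fw xx j = fw b j - tt0 * (j \in A)%:R.
Proof.
rewrite /fw /xx /sg !mxE.
case: (boolP (j \in A)) => jA; last first.
  by rewrite (fwb_out jA) !(normr0, mul0r, mulr0, subr0).
have bj := fwb_gt0 jA; have tl := tt0_lt jA.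
rewrite mulr1 /fw in bj tl *.
have -> : b 0 j - tt0 * (b 0 j / `|b 0 j|) = b 0 j * (1 - tt0 / `|b 0 j|).
  by field; rewrite gt_eqF.
rewrite normrM [`|1 - _|]ger0_norm; last first.
  by rewrite subr_ge0 ler_pdivrMr // mul1r ltW.
by field; rewrite gt_eqF.
Qed.

Lemma swap_Sk m : (m <= p)%N ->
  Sk xx m + tt0 * (minn m Rn)%:R <= Sk b m.
Proof.
move=> mp; set B := top xx m.
have cB : #|B| = m by exact: card_top.
have HBA : (minn m Rn <= #|B :&: A|)%N.
  rewrite leqNgt; apply/negP => hlt.
  have : (0 < #|B :\: A|)%N.
    by rewrite cardsD cB subn_gt0; apply: leq_trans hlt (geq_minl _ _).
  rewrite lt0n cards_eq0 => /set0Pn[i]; rewrite inE => /andP[iA iB].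
  have : (0 < #|A :\: B|)%N.
    rewrite cardsD subn_gt0 finset.setIC.
    by apply: leq_trans hlt (geq_minr _ _).
  rewrite lt0n cards_eq0 => /set0Pn[j]; rewrite inE => /andP[jB jA].
  have jBi : j \notin B :\ i by rewrite inE negb_and jB orbT.
  have cB' : #|j |: (B :\ i)| = m.
    by rewrite cardsU1 jBi /= -cB (cardsD1 i B) iB.
  have := Sk_max xx mp cB'.
  rewrite (big_setU1 _ jBi) /= /Sk -/B (big_setD1 i iB) /=.
  rewrite (fw_xx i) (fw_xx j) (negbTE iA) jA mulr0 mulr1 subr0.
  have -> : fw b i = 0 by rewrite /fw fwb_out // normr0.
  have := tt0_lt jA; lra.
apply: le_trans (Sk_max b mp cB).
have -> : \sum_(j in B) fw b j = \sum_(j in B) (fw xx j + tt0 * (j \in A)%:R).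
  by apply: eq_bigr => j _; rewrite fw_xx; lra.
rewrite big_split /= -mulr_sumr sum_indic.
rewrite lerD2l; apply: ler_wpM2l; first exact: ltW tt0_gt0.
by rewrite ler_nat.
Qed.

Lemma F1 : \sum_(j in A) fw u j = Lam lam Rn /\
  forall j, j \in A -> u 0 j * (b 0 j / `|b 0 j|) = fw u j.
Proof.
have Jx : J xx <= J b + (- tt0) * Lam lam Rn.
  apply: (J_le Hmono Hnn) => //; first exact: card_le_p.
  move=> m /andP[_ mp]; have := swap_Sk mp; lra.
have H1 : \sum_j u 0 j * (xx 0 j - b 0 j) = - tt0 * \sum_(j in A) u 0 j * (b 0 j / `|b 0 j|).
  rewrite mulr_sumr [RHS]big_mkcond /=; apply: eq_bigr => j _.
  rewrite /xx /sg !mxE; case: (boolP (j \in A)) => jA; first by ring.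
  by rewrite (fwb_out jA) mul0r !mulr0 subr0 subrr mulr0.
have Hle : forall j, j \in A -> u 0 j * (b 0 j / `|b 0 j|) <= fw u j.
  move=> j jA; have bj := fwb_gt0 jA; rewrite /fw in bj *.
  apply: le_trans (ler_norm _) _.
  by rewrite normrM normf_div normr_id divff ?gt_eqF // mulr1.
have H2 : Lam lam Rn <= \sum_(j in A) u 0 j * (b 0 j / `|b 0 j|).
  have := BI xx; rewrite H1.
  have := tt0_gt0 => t0 h.
  have : tt0 * Lam lam Rn <= tt0 * \sum_(j in A) u 0 j * (b 0 j / `|b 0 j|) by lra.
  by rewrite ler_pM2l.
have H3 : \sum_(j in A) u 0 j * (b 0 j / `|b 0 j|) <= \sum_(j in A) fw u j.
  exact: ler_sum.
have H4 := F3 A.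
split; first lra.
have H5 : \sum_(j in A) (fw u j - u 0 j * (b 0 j / `|b 0 j|)) = 0.
  rewrite sumrB; lra.
move=> j jA; apply/eqP; rewrite eq_sym -subr_eq0; apply/eqP.
apply: (psumr_eq0P _ H5) => // k kA.
by rewrite subr_ge0; apply: Hle.
Qed.

Lemma fwT j : fw TT j = fw u j + a * fw b j.
Proof.
rewrite /fw /TT !mxE.
case: (boolP (j \in A)) => jA; last by rewrite (fwb_out jA) !mulr0 addr0 normr0 mulr0 addr0.
have := (F1.2 j jA); rewrite /fw.
have bj := fwb_gt0 jA; rewrite /fw in bj.
case: (ltrgtP (b 0 j) 0) => hb; last by move: bj; rewrite hb normr0 ltxx.
- rewrite (ltr0_norm hb) => e.
  have ue : `|u 0 j| = - u 0 j by rewrite -e; field; rewrite lt_eqF.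
  have u0 : u 0 j <= 0 by have := normr_ge0 (u 0 j); lra.
  rewrite ue ler0_norm; last first.
    have : a * b 0 j < 0 by rewrite pmulr_rlt0.
    lra.
  ring.
- rewrite (gtr0_norm hb) => e.
  have ue : `|u 0 j| = u 0 j by rewrite -e; field; rewrite gt_eqF.
  have u0 : 0 <= u 0 j by have := normr_ge0 (u 0 j); lra.
  rewrite ue ger0_norm; last first.
    have : 0 < a * b 0 j by rewrite mulr_gt0.
    lra.
  ring.
Qed.

Lemma sumT (B : {set 'I_p}) :
  \sum_(j in B) fw TT j = \sum_(j in B) fw u j + a * \sum_(j in B) fw b j.
Proof. by rewrite mulr_sumr -big_split /=; apply: eq_bigr => j _; rewrite fwT. Qed.

Lemma sumb_in (B : {set 'I_p}) : \sum_(j in B) fw b j = \sum_(j in B :&: A) fw b j.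
Proof.
rewrite (big_setID A) /= [X in _ + X]big1 ?addr0 // => j.
by rewrite inE => /andP[jA _]; rewrite /fw fwb_out // normr0.
Qed.

Lemma sumb_le (B : {set 'I_p}) : \sum_(j in B) fw b j <= \sum_(j in A) fw b j.
Proof.
rewrite sumb_in [X in _ <= X](big_setID B) /= finset.setIC lerDl.
by apply: sumr_ge0 => j _; exact: fw_ge0.
Qed.

Lemma sumb_lt (B : {set 'I_p}) : (#|B| < Rn)%N ->
  \sum_(j in B) fw b j < \sum_(j in A) fw b j.
Proof.
move=> hB; rewrite sumb_in [X in _ < X](big_setID B) /= finset.setIC ltrDl.
have : (0 < #|A :\: B|)%N.
  rewrite cardsD subn_gt0; apply: leq_ltn_trans hB.
  by rewrite finset.setIC; apply: subset_leq_card; apply: subsetIl.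
rewrite lt0n cards_eq0 => /set0Pn[k kAB].
rewrite (big_setD1 k kAB) /=.
have h1 : 0 < fw b k.
  by move: kAB; rewrite !inE => /andP[_ kA]; rewrite /fw normr_gt0.
have h2 : 0 <= \sum_(i in A :\: B :\ k) fw b i.
  by apply: sumr_ge0 => j _; exact: fw_ge0.
lra.
Qed.

Lemma SkT_Rn : Lam lam Rn + a * \sum_(j in A) fw b j <= Sk TT Rn.
Proof.
have := Sk_max TT (card_le_p A) (erefl Rn); rewrite sumT (proj1 F1); lra.
Qed.

Lemma SkT_up j : (j <= p)%N ->
  Sk TT j <= Lam lam j + a * \sum_(k in top TT j) fw b k.
Proof.
move=> jp; rewrite {1}/Sk sumT lerD2r.
by have := F3 (top TT j); rewrite card_top.
Qed.

Lemma G1a j : (j < Rn)%N -> Lam lam Rn - Lam lam j < Sk TT Rn - Sk TT j.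
Proof.
move=> jR; have jp : (j <= p)%N by apply: leq_trans (ltnW jR) (card_le_p A).
have := SkT_Rn; have := SkT_up jp.
have := sumb_lt (B := top TT j); rewrite card_top // => /(_ jR) h.
have := ltr_pM2l a0; move=> /(_ _ _) e.
have : a * \sum_(k in top TT j) fw b k < a * \sum_(k in A) fw b k by rewrite ltr_pM2l.
lra.
Qed.

Lemma G1b j : (Rn < j <= p)%N -> Sk TT j - Sk TT Rn <= Lam lam j - Lam lam Rn.
Proof.
move=> /andP[Rj jp].
have := SkT_Rn; have := SkT_up jp.
have : a * \sum_(k in top TT j) fw b k <= a * \sum_(k in A) fw b k.
  by rewrite ler_pM2l //; exact: sumb_le.
lra.
Qed.

Lemma G2a j : j \in A -> lam Rn.-1 < fw TT j.
Proof.
move=> jA; rewrite fwT.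
have := F3 (A :\ j); have := proj1 F1.
rewrite (big_setD1 j jA) /=.
have cA : Rn = #|A :\ j|.+1 by rewrite (cardsD1 j A) jA.
rewrite cA LamS /= => h1 h2.
have : 0 < a * fw b j by rewrite mulr_gt0 // fwb_gt0.
lra.
Qed.

Lemma G2b j : j \notin A -> (Rn < p)%N /\ fw TT j <= lam Rn.
Proof.
move=> jA; rewrite fwT /fw (fwb_out jA) normr0 mulr0 addr0.
have c1 : #|j |: A| = Rn.+1 by rewrite cardsU1 jA.
split; first by rewrite -c1 card_le_p.
have := F3 (j |: A); rewrite (big_setU1 _ jA) /= c1 LamS (proj1 F1) /fw; lra.
Qed.


Lemma G1b' j : (Rn < j <= p)%N -> Sk TT j - Sk TT Rn <= Lam lam j - Lam lam Rn.
Proof. exact: G1b. Qed.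

Lemma main_det r i : (0 < r <= p)%N ->
  ((lam r.-1 < `|TT 0 i|) /\ H_set lam r TT) <-> (b 0 i != 0 /\ Rn = r).
Proof.
move=> /andP[r0 rp].
have Rp : (Rn <= p)%N := card_le_p A.
have HR : H_set lam Rn TT.
  apply/(H_setE _ _ Rp); split; [exact: G1a | exact: G1b].
have uq : H_set lam r TT -> r = Rn.
  move/(H_setE _ _ rp) => [H1 H2].
  case: (ltngtP r Rn) => h //.
  - exfalso; have := G1a h; have := H2 Rn; rewrite h Rp => /(_ isT); lra.
  - exfalso; have := H1 Rn h; have := G1b'; move=> /(_ r); rewrite h rp => /(_ isT); lra.
split.
- move=> [hT hH]; have e := uq hH; split; last by rewrite e.
  apply/negP => /eqP bi0.
  have iA : i \notin A by rewrite inE bi0 eqxx.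
  have [Rlt h] := G2b iA.
  rewrite /fw in h.
  have : lam Rn <= lam Rn.-1.
    apply: Hmono; rewrite Rlt andbT; exact: leq_pred.
  rewrite e in hT; lra.
- move=> [bi e]; rewrite -e; split; last exact: HR.
  have := G2a (j := i); rewrite inE bi => /(_ isT); rewrite /fw.
  done.
Qed.

End Det.
Lemma card_sum {R : realType} {p : nat} (P Q : pred 'I_p) :
  \sum_(i | P i) ((Q i)%:R : R) = (#|[set i | P i && Q i]|)%:R.
Proof.
have -> : (#|[set i | P i && Q i]|)%:R = \sum_(i in [set i | P i && Q i]) (1 : R).
  by rewrite sumr_const.
rewrite big_mkcond [RHS]big_mkcond /=; apply: eq_bigr => i _.
by rewrite inE; case: (P i); case: (Q i).
Qed.

Lemma ratio_eq {R : realType} {p : nat} (b0 bh : 'rV[R]_p) :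
  ((nV b0 bh)%:R / (maxn (nR bh) 1)%:R : R) =
  \sum_(1 <= r < p.+1) ((r%:R)^-1 *
     \sum_(i : 'I_p | b0 0 i == 0) (((bh 0 i != 0) && (nR bh == r))%:R : R)).
Proof.
set Rw := nR bh.
have Rp : (Rw <= p)%N by exact: card_le_p.
have inner r : \sum_(i : 'I_p | b0 0 i == 0) (((bh 0 i != 0) && (Rw == r))%:R : R)
              = (Rw == r)%:R * (nV b0 bh)%:R.
  case: eqP => _.
    by under eq_bigr do rewrite andbT; rewrite card_sum mul1r.
  by under eq_bigr do rewrite andbF; rewrite big1 // mul0r.
under eq_bigr do rewrite inner.
have [R0|Rpos] := eqVneq Rw 0%N.
  have nV0 : nV b0 bh = 0%N.
    apply/eqP; rewrite -leqn0 -R0; apply: subset_leq_card.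
    by apply/fintype.subsetP => j; rewrite !inE => /andP[_ ->].
  rewrite nV0 mul0r big1_seq // => r /andP[_]; rewrite mem_index_iota R0.
  by case: r => // r _; rewrite mul0r mulr0.
rewrite (bigD1_seq Rw) /=; last first.
- by rewrite /index_iota iota_uniq.
- by rewrite mem_index_iota lt0n Rpos ltnS.
rewrite big1 ?addr0; last by move=> r /negbTE; rewrite eq_sym => ->; rewrite mul0r mulr0.
have -> : maxn Rw 1 = Rw by apply/maxn_idPl; rewrite lt0n.
by rewrite eqxx mul1r mulrC.
Qed.

Section Final.
Local Open Scope classical_set_scope.

Lemma indic_E {d} {Omega : measurableType d} {R : realType} {p : nat}
  (bhat : Omega -> 'rV[R]_p) r i w :
  \1_[set w | bhat w 0 i != 0 /\ nR (bhat w) = r] w =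
  (((bhat w 0 i != 0) && (nR (bhat w) == r))%:R : R).
Proof.
rewrite indicE; case: (boolP ((bhat w 0 i != 0) && (nR (bhat w) == r))).
  by move=> /andP[h1 /eqP h2]; rewrite mem_set.
move=> h; rewrite memNset //= => -[h1 h2]; move: h; rewrite h1 h2 eqxx.
by [].
Qed.

Lemma indic_set {T : Type} {R : realType} (P : T -> bool) w :
  \1_[set x | P x] w = ((P w)%:R : R).
Proof.
rewrite indicE; case: (boolP (P w)) => h; first by rewrite mem_set.
by rewrite memNset //= => h'; move: h; rewrite h'.
Qed.

Lemma meas_E {d} {Omega : measurableType d} {R : realType} {p : nat}
  (bhat : Omega -> 'rV[R]_p) :
  (forall j : 'I_p, measurable_fun setT (fun w => bhat w 0 j)) ->
  forall r i, measurable [set w | bhat w 0 i != 0 /\ nR (bhat w) = r].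
Proof.
move=> mb r i.
have mZ j : measurable [set w | bhat w 0 j != 0].
  have := mb j measurableT _ (measurableC (measurable_set1 (0 : R))).
  rewrite setTI; congr measurable; apply/seteqP; split => w /=.
    by move=> h; apply/eqP.
  by move=> /eqP.
pose g := fun w => \sum_(j : 'I_p) (\1_[set w | bhat w 0 j != 0] w : R).
have mg : measurable_fun setT g.
  by apply: measurable_sum => j; apply: measurable_realfun.measurable_indic.
have gE w : g w = (nR (bhat w))%:R.
  rewrite /g /nR.
  under eq_bigr => j _ do rewrite indic_set.
  by rewrite (card_sum xpredT (fun j => bhat w 0 j != 0)).
have mN : measurable [set w | nR (bhat w) = r].
  have := mg measurableT _ (measurable_set1 (r%:R : R)).
  rewrite setTI; congr measurable; apply/seteqP; split => w /=.
    by rewrite gE => /eqP; rewrite eqr_nat => /eqP.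
  by rewrite gE => ->.
have -> : [set w | bhat w 0 i != 0 /\ nR (bhat w) = r] =
          [set w | bhat w 0 i != 0] `&` [set w | nR (bhat w) = r] by [].
exact: measurableI.
Qed.

End Final.
Lemma msum_filter {d} {Omega : measurableType d} {R : realType} {I : Type}
  (D : set Omega) (s : seq I) (P : pred I) (h : I -> Omega -> R) :
  (forall i, measurable_fun D (h i)) ->
  measurable_fun D (fun x => \sum_(i <- s | P i) h i x).
Proof.
move=> mh.
have -> : (fun x => \sum_(i <- s | P i) h i x) = (fun x => \sum_(i <- [seq i <- s | P i]) h i x).
  by apply: funext => x; rewrite big_filter.
exact: measurable_sum.
Qed.

Lemma indic_ge0' {T : Type} {R : realType} (A : set T) x : 0 <= (\1_A x : R).
Proof. by rewrite indicE ler0n. Qed.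

Unset Implicit Arguments.
Set Strict Implicit.
Set Printing Implicit Defensive.

Theorem corollary1 (d : measure_display) (Omega : measurableType d)
  (R : realType) (P : probability Omega R) (p : nat)
  (l : Omega -> 'rV[R]_p -> R) (lam : nat -> R)
  (bhat : Omega -> 'rV[R]_p) (b0 : 'rV[R]_p) (a : R) :
  (forall w, convex_fun (l w)) ->
  (forall w (b : 'rV[R]_p), differentiable (l w) b) ->
  (forall i j : nat, (i <= j < p)%N -> lam j <= lam i) ->
  (forall i : nat, (i < p)%N -> 0 <= lam i) ->
  (forall w (b : 'rV[R]_p),
     l w (bhat w) + slope_pen lam (bhat w) <= l w b + slope_pen lam b) ->
  (forall j : 'I_p, measurable_fun setT (fun w => bhat w 0 j)) ->
  (forall j : 'I_p, measurable_fun setT (fun w => grad (l w) (bhat w) 0 j)) ->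
  0 < a ->
  let T := fun w => - grad (l w) (bhat w) + a *: bhat w in
  ('E_P[fun w => ((nV b0 (bhat w))%:R / (maxn (nR (bhat w)) 1)%:R)%R] =
   \sum_(1 <= r < p.+1)
      ((r%:R)^-1 : R)%:E *
      \sum_(i : 'I_p | (b0 0 i == 0)%R)
         P [set w : Omega | (lam r.-1 < `|T w 0 i|)%R /\ H_set lam r (T w)]%classic)%E.
Proof.
move=> Hcvx Hdiff Hmono Hnn Hmin mb mgr a0 T.
pose E := fun r (i : 'I_p) => [set w | bhat w 0 i != 0 /\ nR (bhat w) = r]%classic.
have mE : forall r i, measurable (E r i) := meas_E mb.
have BI : forall w (c : 'rV[R]_p),
    \sum_j (- grad (l w) (bhat w)) 0 j * (c 0 j - bhat w 0 j) <=
    slope_pen lam c - slope_pen lam (bhat w).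
  move=> w c; under eq_bigr do rewrite mxE.
  exact: (base_ineq Hmono Hnn (Hdiff w (bhat w)) (Hmin w) c).
have setE : forall r i, (0 < r <= p)%N ->
    [set w | (lam r.-1 < `|T w 0 i|)%R /\ H_set lam r (T w)]%classic = E r i.
  move=> r i hr; apply/seteqP; split => w /=.
  - by move/(main_det Hmono Hnn a0 (BI w) i hr).
  - by move/(main_det Hmono Hnn a0 (BI w) i hr).
have -> : (\sum_(1 <= r < p.+1)
      ((r%:R)^-1 : R)%:E *
      \sum_(i : 'I_p | (b0 0 i == 0)%R)
         P [set w : Omega | (lam r.-1 < `|T w 0 i|)%R /\ H_set lam r (T w)]%classic)%E
   = (\sum_(1 <= r < p.+1) ((r%:R)^-1 : R)%:E *
      \sum_(i : 'I_p | (b0 0 i == 0)%R) P (E r i))%E.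
  apply: eq_big_nat => r /andP[r1 rp]; congr (_ * _)%E; apply: eq_bigr => i _.
  by rewrite setE // r1.
rewrite unlock.
rewrite (eq_integral (fun w => \sum_(1 <= r < p.+1)
   (((r%:R)^-1 * \sum_(i : 'I_p | b0 0 i == 0) \1_(E r i) w) : R)%:E)%E); last first.
  move=> w _; rewrite sumEFin ratio_eq; congr EFin; apply: eq_bigr => r _.
  congr (_ * _); apply: eq_bigr => i _; by rewrite indic_E.
rewrite ge0_integral_sum //; first last.
- move=> r w _; rewrite lee_fin; apply: mulr_ge0; first by rewrite invr_ge0 ler0n.
  by apply: sumr_ge0 => i _; exact: indic_ge0'.
- move=> r; apply/measurable_realfun.measurable_EFinP; apply: measurable_realfun.measurable_funM; first exact: measurable_cst.
  by apply: msum_filter => i; apply: measurable_realfun.measurable_indic.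
apply: eq_big_nat => r /andP[r1 rp].
rewrite (eq_integral (fun w => (((r%:R)^-1 : R)%:E *
     (\sum_(i : 'I_p | b0 0 i == 0) \1_(E r i) w)%:E)%E)); last first.
  by move=> w _; rewrite EFinM.
rewrite ge0_integralZl_EFin //; first last.
- apply/measurable_realfun.measurable_EFinP.
  by apply: msum_filter => i; apply: measurable_realfun.measurable_indic.
- move=> w _; rewrite lee_fin.
  by apply: sumr_ge0 => i _; exact: indic_ge0'.
congr (_ * _)%E.
rewrite (eq_integral (fun w => (\sum_(i <- [seq i <- index_enum 'I_p | (b0 0 i == 0)%R])
     (\1_(E r i) w : R)%:E)%E)); last first.
  by move=> w _; rewrite big_filter sumEFin.
rewrite ge0_integral_sum; last first.
- by move=> i w _; rewrite lee_fin; exact: indic_ge0'.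
- move=> i; apply: (measurable_realfun.measurable_EFinP _ _).2.
  exact: measurable_realfun.measurable_indic (mE r i).
- exact: measurableT.
rewrite big_filter; apply: eq_bigr => i _.
by rewrite integral_indic // setIT.
Qed.
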